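(* Let $g\ge1$, $n\ge3$, $k\in\{1,\dots,n\}$, and let $y\in A_g^n$ be a point at which $f_k$ attains its minimum on $A_g^n$. Then $y=y(g,n,i_0)$ for some $i_0\le k$.
   Context: For $g,n\ge1$, $A_g^n\subseteq\mathbb{R}^n$ is the set of $(x_1,\dots,x_n)$ with $x_1\ge\dots\ge x_n\ge0$, $x_1+\dots+x_n=1/g$, and $x_1\cdots x_k\le g(x_{k+1}+\dots+x_n)$ for all $k=1,\dots,n-1$. $f_k(x)=x_1\cdots x_k$ on $A_g^n$. Sylvester sequences: $s_{g,1}=g+1$, $s_{g,k+1}=s_{g,k}(s_{g,k}-1)+1$, $t_{g,k}=s_{g,k}-1$. For $1\le k\le n$, $y(g,n,k)=\big(\tfrac1{s_{g,1}},\dots,\tfrac1{s_{g,k-1}},\tfrac{1}{(n-k+1)t_{g,k}},\dots,\tfrac{1}{(n-k+1)t_{g,k}}\big)\in A_g^n$, the last entry repeated $n-k+1$ times. *)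

(* Defs.v *)
(* R : realType (the reals), vectors in R^n as 'rV[R]_n,
   0-based indices (paper's x_i is x 0 (i-1)). *)
From mathcomp Require Import all_boot all_order all_algebra.
From mathcomp Require Import reals.
Unset Printing Implicit Defensive.
Import Order.TTheory GRing.Theory Num.Theory.
Local Open Scope ring_scope.

(* sylv0 g m = s_{g,m+1} *)
Fixpoint sylv0 (g m : nat) : nat :=
  match m with
  | 0 => g.+1
  | m'.+1 => (sylv0 g m' * (sylv0 g m' - 1) + 1)%N
  end.

(* Paper's s_{g,k} (k >= 1); the value at k = 0 is irrelevant. *)
Definition sylv (g k : nat) : nat := sylv0 g k.-1.
Definition tsylv (g k : nat) : nat := (sylv g k - 1)%N.

Definition inA {R : realType} (g n : nat) (x : 'rV[R]_n) : Prop :=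
  (forall i j : 'I_n, (i <= j)%N -> x 0 j <= x 0 i) /\
  (forall i : 'I_n, i.+1 = n -> 0 <= x 0 i) /\
  \sum_(i < n) x 0 i = 1 / g%:R /\
  (forall k : nat, (1 <= k <= n - 1)%N ->
     \prod_(i < n | (i < k)%N) x 0 i <= g%:R * \sum_(i < n | (k <= i)%N) x 0 i).

Definition fk {R : realType} {n : nat} (k : nat) (x : 'rV[R]_n) : R :=
  \prod_(i < n | (i < k)%N) x 0 i.

Definition yv {R : realType} (g n k : nat) : 'rV[R]_n :=
  \row_(i < n) (if (i.+1 <= k - 1)%N then 1 / (sylv g i.+1)%:R
                else 1 / ((n - k + 1)%:R * (tsylv g k)%:R)).

(* Main.v *)
Require Import Defs.
From mathcomp Require Import all_boot all_order all_algebra.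
From mathcomp Require Import reals.
From mathcomp Require Import ring lra zify.
Import Order.TTheory GRing.Theory Num.Theory.
Local Open Scope ring_scope.
Set Implicit Arguments.
Unset Strict Implicit.

Ltac clr := repeat match goal with
 | H : is_true (@Order.le _ _ _ _) |- _ => clear H
 | H : is_true (@Order.lt _ _ _ _) |- _ => clear H
 | H : @eq (GRing.Zmodule.sort _) _ _ |- _ => clear H
 | H : forall _, _ |- _ => clear H
 | H : is_true (_ && _) |- _ => case/andP: H => ? ?
 end.
Ltac slia := clr; lia.

Section Main.
Variable R : realType.
Variables (g n : nat).
Hypothesis g1 : (1 <= g)%N.
Hypothesis n3 : (3 <= n)%N.

Definition Pr (a : nat -> R) j := \prod_(0 <= i < j) a i.
Definition Tl (a : nat -> R) j := \sum_(j <= i < n) a i.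
Definition GG : R := g%:R.

Lemma GG_ge1 : 1 <= GG.
Proof. by rewrite /GG ler1n. Qed.
Lemma GG_gt0 : 0 < GG.
Proof. by have := GG_ge1; lra. Qed.
Lemma gnz : (g%:R : R) != 0.
Proof. by rewrite pnatr_eq0; lia. Qed.

Definition feas (a : nat -> R) :=
  [/\ forall i, (i.+1 < n)%N -> a i.+1 <= a i,
      0 <= a n.-1,
      Tl a 0 = 1 / GG &
      forall j, (0 < j)%N -> (j < n)%N -> Pr a j <= GG * Tl a j].

Lemma PrS a j : Pr a j.+1 = Pr a j * a j.
Proof. by rewrite /Pr big_nat_recr. Qed.

Lemma Pr0 a : Pr a 0 = 1.
Proof. by rewrite /Pr big_geq. Qed.

Lemma Pr_split a {m j} : (m <= j)%N -> Pr a j = Pr a m * \prod_(m <= i < j) a i.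
Proof. by move=> h; rewrite /Pr (big_cat_nat (leq0n m) h). Qed.

Lemma Tl_split a {j m} : (j <= m)%N -> (m <= n)%N ->
  Tl a j = \sum_(j <= i < m) a i + Tl a m.
Proof. by move=> h1 h2; rewrite /Tl (big_cat_nat h1 h2). Qed.

Lemma TlS a {j} : (j < n)%N -> Tl a j = a j + Tl a j.+1.
Proof. by move=> h; rewrite /Tl big_ltn. Qed.

Lemma Tl_n a : Tl a n = 0.
Proof. by rewrite /Tl big_geq. Qed.

Lemma Tl_ge0 a j : (forall i, (i < n)%N -> 0 <= a i) -> 0 <= Tl a j.
Proof.
move=> h; rewrite /Tl big_nat_cond; apply: sumr_ge0 => i /andP[/andP[_ ?] _].
exact: h.
Qed.

Lemma Pr_ge0 a j : (forall i, (i < j)%N -> 0 <= a i) -> 0 <= Pr a j.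
Proof.
move=> h; rewrite /Pr big_nat_cond; apply: prodr_ge0 => i /andP[/andP[_ ?] _].
exact: h.
Qed.

Lemma Pr_gt0 a j : (forall i, (i < j)%N -> 0 < a i) -> 0 < Pr a j.
Proof.
move=> h; rewrite /Pr big_nat_cond; apply: prodr_gt0 => i /andP[/andP[_ ?] _].
exact: h.
Qed.

Lemma Pr_le1 a j : (forall i, (i < j)%N -> 0 <= a i <= 1) -> Pr a j <= 1.
Proof.
elim: j => [|j IH] h; first by rewrite Pr0.
rewrite PrS.
have h1 : Pr a j <= 1 by apply: IH => i hi; apply: h; lia.
have h2 : 0 <= Pr a j by apply: Pr_ge0 => i hi; have /andP[] := h i (ltn_trans hi (ltnSn j)).
have /andP[h3 h4] := h j (ltnSn j).
by nra.
Qed.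

Lemma feas_mono a : feas a -> forall i j, (i <= j)%N -> (j < n)%N -> a j <= a i.
Proof.
case=> hm _ _ _ i j hij; elim: j hij => [|j IH] hij hj.
  by have -> : i = 0%N by lia.
case: (ltngtP i j.+1) => [h|h|->]; last by [].
- apply: le_trans (hm _ hj) (IH _ _); lia.
- lia.
Qed.

Lemma feas_pos a : feas a -> forall i, (i < n)%N -> 0 < a i.
Proof.
move=> fa; have [hm hl hs hc] := fa.
have mono := @feas_mono a fa.
have nn : forall i, (i < n)%N -> 0 <= a i.
  move=> i hi; apply: le_trans hl (mono _ _ _ _); lia.
suff : 0 < a n.-1.
  move=> h i hi; apply: lt_le_trans h (mono _ _ _ _); lia.
rewrite lt_def hl andbT; apply/negP => /eqP h0.
have ex : exists i, (i < n)%N && (a i == 0) by exists n.-1; rewrite h0 eqxx; apply/andP; split => //; lia.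
case: (ex_minnP ex) => p /andP[hp /eqP ap] hmin.
have pos : forall i, (i < p)%N -> 0 < a i.
  move=> i hi; rewrite lt_def nn ?andbT; last by lia.
  apply/negP => ai; have := hmin i; rewrite ai andbT; move=> /(_ (ltn_trans hi hp)); lia.
have zero : forall i, (p <= i)%N -> (i < n)%N -> a i = 0.
  move=> i h1 h2; apply/le_anti; rewrite nn // -ap mono //.
case: p hp ap hmin pos zero => [|p] hp ap _ pos zero.
  have : Tl a 0 = 0.
    rewrite /Tl big_nat_cond big1 // => i /andP[/andP[_ ?] _]; exact: zero.
  rewrite hs; have := GG_gt0; move=> hg h; have : 0 < 1 / GG by rewrite divr_gt0.
  by rewrite h ltxx.
have := hc p.+1 isT hp.
have -> : Tl a p.+1 = 0.
  rewrite /Tl big_nat_cond big1 // => i /andP[/andP[? ?] _]; apply: zero; lia.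
rewrite mulr0 => h.
have : 0 < Pr a p.+1 by apply: Pr_gt0.
by rewrite ltNge h.
Qed.


Lemma entry_le_sum b i : (forall l, (l < n)%N -> 0 <= b l) -> (i < n)%N -> b i <= Tl b 0.
Proof.
move=> h hi; rewrite (Tl_split b (leq0n i) (ltnW hi)) (TlS b hi).
have h1 : 0 <= \sum_(0 <= l < i) b l.
  rewrite big_nat_cond; apply: sumr_ge0 => l /andP[/andP[_ ?] _]; apply: h; lia.
have h2 := Tl_ge0 i.+1 h.
lra.
Qed.

Lemma entry_le1 b i : (forall l, (l < n)%N -> 0 <= b l) -> Tl b 0 = 1 / GG -> (i < n)%N ->
  0 <= b i <= 1.
Proof.
move=> h hs hi; rewrite h //=; apply: le_trans (entry_le_sum h hi) _.
rewrite hs ler_pdivrMr ?GG_gt0 // mul1r; exact: GG_ge1.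
Qed.

Lemma AUTO b j : (forall l, (l < n)%N -> 0 <= b l) -> Tl b 0 = 1 / GG ->
  (0 < j)%N -> (j < n)%N -> b j.-1 <= b j -> Pr b j <= GG * Tl b j.
Proof.
move=> h hs; case: j => [//|j] _ hj hb /=.
have e1 := entry_le1 h hs.
have hP : Pr b j <= 1 by apply: Pr_le1 => i hi; apply: e1; lia.
have hP0 : 0 <= Pr b j by apply: Pr_ge0 => i hi; apply: h; lia.
have /andP[hb0 hb1] := e1 j (ltnW hj).
rewrite PrS (TlS b hj).
have hT := Tl_ge0 j.+2 h.
have hG := GG_ge1.
have : b j.+1 + Tl b j.+2 <= GG * (b j.+1 + Tl b j.+2).
  rewrite -{1}[b j.+1 + _]mul1r ler_wpM2r //; lra.
simpl in hb; nra.
Qed.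

Lemma feas_lt1 a i : feas a -> (i < n)%N -> a i < 1.
Proof.
move=> fa hi; have [hm hl hs hc] := fa.
have pos := feas_pos fa.
have mono := @feas_mono a fa.
apply: le_lt_trans (mono 0%N i (leq0n _) hi) _.
have : a 0%N < Tl a 0.
  rewrite (TlS a (ltnW (ltnW n3))) (TlS a (ltnW n3)).
  have := pos 1%N (ltnW n3); have := Tl_ge0 2 (fun l hl => ltW (pos l hl)); lra.
rewrite hs => h; apply: lt_le_trans h _.
rewrite ler_pdivrMr ?GG_gt0 // mul1r; exact: GG_ge1.
Qed.

Lemma SA a j : feas a -> (0 < j)%N -> (j < n)%N -> a j.-1 = a j -> Pr a j < GG * Tl a j.
Proof.
move=> fa hj0 hj ha.
have pos := feas_pos fa.
have nn : forall l, (l < n)%N -> 0 <= a l by move=> l hl; apply: ltW; apply: pos.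
have hG := GG_ge1.
have hTG : forall m, Tl a m <= GG * Tl a m.
  move=> m; have := Tl_ge0 m nn; move=> h0; rewrite -{1}[Tl a m]mul1r ler_wpM2r //.
case: j hj0 hj ha => [//|j] _ hj ha /=.
simpl in ha.
have hP0 : 0 <= Pr a j by apply: Pr_ge0 => i hi; apply: nn; lia.
have hP : Pr a j <= 1 by apply: Pr_le1 => i hi; apply/andP; split; [apply: nn | apply: ltW; apply: (feas_lt1 fa)]; lia.
case: (ltnP j.+2 n) => hjn.
  rewrite PrS; apply: lt_le_trans (hTG _).
  rewrite (TlS a hj) (TlS a hjn).
  have := pos j.+2 hjn; have := Tl_ge0 j.+3 nn; have := pos j (ltnW hj); nra.
have ejn : j.+2 = n by lia.
case: j hj ha hP0 hP ejn hjn => [|j] hj ha hP0 hP ejn hjn; first by lia.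
rewrite PrS; apply: lt_le_trans (hTG _).
have hPlt : Pr a j.+1 < 1.
  rewrite PrS.
  have h1 : Pr a j <= 1 by apply: Pr_le1 => i hi; apply/andP; split; [apply: nn | apply: ltW; apply: (feas_lt1 fa)]; lia.
  have h2 : 0 <= Pr a j by apply: Pr_ge0 => i hi; apply: nn; lia.
  have := feas_lt1 fa (_ : (j < n)%N); move=> /(_ ltac:(lia)) h3.
  have h4 := nn j ltac:(lia).
  nra.
rewrite (TlS a hj) ejn Tl_n addr0.
have := pos j.+1 (ltnW hj); rewrite ha; nra.
Qed.


Definition uu l : R := (sylv0 g l)%:R.
Definition vv l : R := (sylv0 g l)%:R - 1.

Lemma sylv0_ge2 l : (2 <= sylv0 g l)%N.
Proof.
elim: l => [|l IH] /=; first by lia.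
have : (1 <= sylv0 g l - 1)%N by lia.
nia.
Qed.

Lemma uv l : uu l = vv l + 1.
Proof. rewrite /vv /uu; ring. Qed.

Lemma vv0 : vv 0 = GG.
Proof. by rewrite /vv /GG /= -addn1 natrD; ring. Qed.

Lemma vvS l : vv l.+1 = uu l * vv l.
Proof.
rewrite /vv /uu /=.
have h := sylv0_ge2 l.
rewrite natrD natrM natrB; last by lia.
ring.
Qed.

Lemma vv_ge1 l : 1 <= vv l.
Proof.
rewrite /vv; have h := sylv0_ge2 l.
have : (2%:R : R) <= (sylv0 g l)%:R by rewrite ler_nat.
lra.
Qed.

Lemma vv_gt0 l : 0 < vv l.
Proof. by have := vv_ge1 l; lra. Qed.

Lemma uu_gt0 l : 0 < uu l.
Proof. by rewrite uv; have := vv_ge1 l; lra. Qed.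

Lemma vv_ge2 l : (0 < l)%N -> 2 <= vv l.
Proof.
case: l => [//|l] _; rewrite vvS uv; have := vv_ge1 l; nra.
Qed.

Lemma uu_le l : uu l <= uu l.+1.
Proof. rewrite !uv vvS uv; have := vv_ge1 l; nra. Qed.

Definition su l : R := 1 / uu l.

Lemma Pr_su j : Pr su j = GG / vv j.
Proof.
elim: j => [|j IH]; first by rewrite Pr0 vv0 divff // gt_eqF // GG_gt0.
rewrite PrS IH /su vvS.
have := uu_gt0 j; have := vv_gt0 j => h1 h2.
field; apply/andP; split; apply: lt0r_neq0 => //.
Qed.

Lemma sum_su j : \sum_(0 <= l < j) su l = 1 / GG - 1 / vv j.
Proof.
elim: j => [|j IH]; first by rewrite big_geq // vv0; ring.
rewrite big_nat_recr //= IH /su vvS uv.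
have := vv_gt0 j => h1.
have h2 : vv j + 1 != 0 by apply: lt0r_neq0; lra.
field; by rewrite h2 (lt0r_neq0 h1) gnz.
Qed.

Definition cc p : R := 1 / ((n - p)%:R * vv p).
Definition yf p l : R := if (l < p)%N then su l else cc p.

Lemma cc_gt0 p : (p < n)%N -> 0 < cc p.
Proof.
move=> h; rewrite /cc divr_gt0 // mulr_gt0 ?vv_gt0 // ltr0n; lia.
Qed.

Lemma cc_le p : (p < n)%N -> cc p * (n - p)%:R = 1 / vv p.
Proof.
move=> h; rewrite /cc.
have h1 : (n - p)%:R != 0 :> R by rewrite pnatr_eq0; lia.
have h2 := vv_gt0 p.
field; apply/andP; split => //; apply: lt0r_neq0 => //.
Qed.

Lemma cc_le1 p : (p < n)%N -> cc p <= 1.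
Proof.
move=> h; rewrite /cc ler_pdivrMr ?mul1r; last by rewrite mulr_gt0 ?vv_gt0 // ltr0n; lia.
have h1 : 1 <= (n - p)%:R :> R by rewrite ler1n; lia.
have := vv_ge1 p; nra.
Qed.

Lemma Pr_yf_le p j : (j <= p)%N -> Pr (yf p) j = GG / vv j.
Proof.
move=> h; rewrite -Pr_su /Pr; apply: eq_big_nat => i hi.
by rewrite /yf; have -> : (i < p)%N by lia.
Qed.

Lemma Pr_yf_ge p j : (p <= j)%N -> Pr (yf p) j = GG / vv p * cc p ^+ (j - p).
Proof.
move=> h; rewrite (Pr_split _ h) Pr_yf_le //; congr (_ * _).
rewrite -prodr_const_nat; apply: eq_big_nat => i hi.
by rewrite /yf; have -> : (i < p)%N = false by lia.
Qed.

Lemma Tl_yf_ge p j : (p <= j)%N -> (j <= n)%N -> Tl (yf p) j = (n - j)%:R * cc p.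
Proof.
move=> h1 h2; rewrite /Tl.
have -> : \sum_(j <= i < n) yf p i = \sum_(j <= i < n) cc p.
  by apply: eq_big_nat => i hi; rewrite /yf; have -> : (i < p)%N = false by lia.
by rewrite sumr_const_nat mulr_natl.
Qed.

Lemma sum_yf_le p j : (j <= p)%N -> \sum_(0 <= l < j) yf p l = 1 / GG - 1 / vv j.
Proof.
move=> h; rewrite -sum_su; apply: eq_big_nat => i hi.
by rewrite /yf; have -> : (i < p)%N by lia.
Qed.

Lemma Tl_yf0 p : (p < n)%N -> Tl (yf p) 0 = 1 / GG.
Proof.
move=> h; rewrite (Tl_split _ (leq0n p) (ltnW h)) sum_yf_le // Tl_yf_ge //; last by lia.
rewrite [_ * cc p]mulrC cc_le //; ring.
Qed.

Lemma Tl_yf_le p j : (p < n)%N -> (j <= p)%N -> Tl (yf p) j = 1 / vv j.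
Proof.
move=> h hj; have := Tl_yf0 h.
rewrite (Tl_split _ (leq0n j) (leq_trans hj (ltnW h))) sum_yf_le //; lra.
Qed.

Lemma yf_feas p : (p < n)%N -> feas (yf p).
Proof.
move=> hp; split.
- move=> l hl; rewrite /yf.
  case: (ltnP l.+1 p) => h1.
    have -> : (l < p)%N by lia.
    rewrite /su ler_pdivrMr ?uu_gt0 // mulrC mulrA mulr1 ler_pdivlMr ?uu_gt0 // mul1r.
    exact: uu_le.
  case: (ltnP l p) => h2; last by [].
  have ep : p = l.+1 by lia.
  rewrite /cc /su ler_pdivrMr; last by rewrite mulr_gt0 ?vv_gt0 // ltr0n; lia.
  rewrite mulrC mulrA mulr1 ler_pdivlMr ?uu_gt0 // mul1r ep vvS.
  have h3 : 1 <= (n - l.+1)%:R :> R by rewrite ler1n; lia.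
  have := vv_ge1 l; have := uu_gt0 l; move=> ha hb.
  have h4 : uu l <= uu l * vv l by nra.
  nra.
- rewrite /yf; case: ifP => _; first by rewrite /su divr_ge0 // ltW // uu_gt0.
  exact: ltW (cc_gt0 hp).
- exact: Tl_yf0.
- move=> j hj0 hj; case: (leqP j p) => h.
    rewrite Pr_yf_le // Tl_yf_le //.
    by rewrite mulrA mulr1.
  rewrite Pr_yf_ge; last by lia.
  rewrite Tl_yf_ge; [|lia|lia].
  have hc0 := cc_gt0 hp; have hc1 := cc_le1 hp.
  have hcx : cc p ^+ (j - p) <= cc p.
    have hjp : (0 < j - p)%N by lia.
    case: (j - p)%N hjp => [|m] hm; first by lia.
    rewrite exprS ler_piMr ?exprn_ile1 // ?ltW //.
  have hv : GG / vv p <= GG.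
    rewrite ler_pdivrMr ?vv_gt0 //; have := vv_ge1 p; have := GG_gt0; nra.
  have hn : 1 <= (n - j)%:R :> R by rewrite ler1n; lia.
  have hG := GG_gt0.
  have hvp : 0 <= GG / vv p by rewrite divr_ge0 // ltW // vv_gt0.
  have hcp : 0 <= cc p ^+ (j - p) by rewrite exprn_ge0 // ltW.
  apply: (@le_trans _ _ (GG * cc p)); first by apply: ler_pM.
  rewrite ler_pM2l // ler_peMl // ltW //.
Qed.


Definition upd (a : nat -> R) p v := fun i => if i == p then v else a i.

Lemma Pr_upd_le a p v j : (j <= p)%N -> Pr (upd a p v) j = Pr a j.
Proof.
move=> h; apply: eq_big_nat => i hi; rewrite /upd; case: eqP => // ?; lia.
Qed.

Lemma Pr_upd_gt a p v j : (p < j)%N -> Pr (upd a p v) j * a p = Pr a j * v.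
Proof.
move=> h; rewrite (Pr_split (upd a p v) h) (Pr_split a h) !PrS !Pr_upd_le //.
have -> : \prod_(p.+1 <= i < j) upd a p v i = \prod_(p.+1 <= i < j) a i.
  apply: eq_big_nat => i hi; rewrite /upd; case: eqP => // ?; lia.
rewrite /upd eqxx; ring.
Qed.

Lemma Tl_upd a p v j : (p < n)%N ->
  Tl (upd a p v) j = Tl a j + (if (j <= p)%N then v - a p else 0).
Proof.
move=> hp; case: (leqP j p) => h.
  rewrite (Tl_split (upd a p v) h (ltnW hp)) (Tl_split a h (ltnW hp)).
  rewrite (TlS (upd a p v) hp) (TlS a hp).
  have -> : \sum_(j <= i < p) upd a p v i = \sum_(j <= i < p) a i.
    apply: eq_big_nat => i hi; rewrite /upd; case: eqP => // ?; lia.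
  have -> : Tl (upd a p v) p.+1 = Tl a p.+1.
    apply: eq_big_nat => i hi; rewrite /upd; case: eqP => // ?; lia.
  rewrite /upd eqxx; ring.
rewrite addr0; apply: eq_big_nat => i hi; rewrite /upd; case: eqP => // ?; lia.
Qed.

Lemma small (h : nat -> R) N c : 0 < c -> (forall j, (j < N)%N -> 0 < h j) ->
  exists e, [/\ 0 < e, e <= c & forall j, (j < N)%N -> e <= h j].
Proof.
move=> hc; elim: N => [|N IH] hh.
  by exists c; split => // j.
have [e [he1 he2 he3]] := IH (fun j hj => hh j (ltnW hj)).
exists (Order.min e (h N)); split.
- by rewrite lt_min he1 hh.
- by rewrite ge_min he2.
- move=> j hj; rewrite ge_min; case: (ltngtP j N) => hjN.
  + by rewrite he3.
  + lia.
  + by rewrite hjN lexx orbT.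
Qed.

Lemma prefix a p : feas a -> (p < n)%N ->
  (forall j, (0 < j)%N -> (j <= p)%N -> Pr a j = GG * Tl a j) ->
  forall l, (l < p)%N -> a l = su l.
Proof.
move=> fa hp ht.
have [_ _ hs _] := fa.
suff H : forall l, (l <= p)%N -> forall i, (i < l)%N -> a i = su i.
  by move=> l hl; apply: (H p (leqnn p)).
elim=> [|l IH] hl i hi; first by [].
have IH' := IH (ltnW hl).
case: (ltngtP i l) => hil; first by apply: IH'.
  lia.
subst i.
have E := ht l.+1 isT hl.
have hPl : Pr a l = GG / vv l.
  rewrite -Pr_su; apply: eq_big_nat => i0 hi0; apply: IH'; lia.
have hSl : \sum_(0 <= i < l) a i = 1 / GG - 1 / vv l.
  rewrite -sum_su; apply: eq_big_nat => i0 hi0; apply: IH'; lia.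
have hT : Tl a l.+1 = 1 / vv l - a l.
  have hln : (l < n)%N by lia.
  have := hs; rewrite (Tl_split a (leq0n l) (ltnW hln)).
  rewrite (TlS a hln) hSl; lra.
move: E; rewrite PrS hPl hT => E.
have hv := vv_gt0 l; have hG := GG_gt0.
have H : a l * uu l = 1.
  rewrite uv.
  have : a l * (vv l + 1) - 1 = (GG / vv l * a l - GG * (1 / vv l - a l)) * (vv l / GG).
    field; by rewrite gnz (lt0r_neq0 hv).
  by rewrite E subrr mul0r => /eqP; rewrite subr_eq0 => /eqP.
rewrite /su -H mulfK //; exact: lt0r_neq0 (uu_gt0 l).
Qed.


Lemma move_alpha a k p b :
  feas a -> (forall c, feas c -> Pr a k <= Pr c k) ->
  (p < b)%N -> (b < k)%N -> (k <= n)%N ->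
  ((0 < p)%N -> a p < a p.-1) ->
  ((b < n.-1)%N -> a b.+1 < a b) ->
  (forall j, (p < j)%N -> (j <= b)%N -> Pr a j < GG * Tl a j) ->
  False.
Proof.
move=> fa Hmin hpb hbk hkn gp gb hsl.
have [hm hl hs hc] := fa.
have pos := feas_pos fa.
have mono := feas_mono fa.
have hbn : (b < n)%N by slia.
have hpn : (p < n)%N by slia.
have hap := pos p hpn; have hab := pos b hbn.
have habp : a b <= a p by apply: mono; slia.
set gap1 := if (0 < p)%N then a p.-1 - a p else 1.
set gap2 := if (b < n.-1)%N then a b - a b.+1 else a b.
have g1p : 0 < gap1 by rewrite /gap1; case: ifP => h //; have := gp h; lra.
have g2p : 0 < gap2.
  rewrite /gap2; case: ifP => h //; have := gb h; lra.
set h := fun j => if (p < j)%N && (j <= b)%N then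
                   (GG * Tl a j - Pr a j) / (Pr a j / a p + GG) else 1.
have hpos : forall j, (j < n)%N -> 0 < h j.
  move=> j hj; rewrite /h; case: ifP => // /andP[h1 h2].
  apply: divr_gt0; first by have := hsl j h1 h2; lra.
  apply: ltr_wpDl; last exact: GG_gt0.
  apply: divr_ge0; last exact: ltW.
  by apply: Pr_ge0 => i hi; apply: ltW; apply: pos; slia.
have hmin0 : 0 < Order.min gap1 gap2 by rewrite lt_min g1p g2p.
have [e [he0 hec heh]] := small hmin0 hpos.
move: hec; rewrite le_min => /andP[he1 he2].
have G1 : (0 < p)%N -> a p + e <= a p.-1.
  by move=> h0; move: he1; rewrite /gap1 h0; lra.
have G2 : (b < n.-1)%N -> a b.+1 <= a b - e.
  by move=> h0; move: he2; rewrite /gap2 h0; lra.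
have G3 : 0 <= a b - e.
  move: he2; rewrite /gap2; case: ifP => h0; last lra.
  have : 0 <= a b.+1 by apply: ltW; apply: pos; slia.
  lra.
set a1 := upd a p (a p + e).
set a' := upd a1 b (a b - e).
have a1b : a1 b = a b by rewrite /a1 /upd; case: eqP => // ?; slia.
have hPle : forall j, (j <= p)%N -> Pr a' j = Pr a j.
  by move=> j hj; rewrite /a' Pr_upd_le; [rewrite /a1 Pr_upd_le | slia].
have hPmid : forall j, (p < j)%N -> (j <= b)%N -> Pr a' j * a p = Pr a j * (a p + e).
  by move=> j h1 h2; rewrite /a' Pr_upd_le // /a1 Pr_upd_gt.
have hPgt : forall j, (b < j)%N -> Pr a' j * (a p * a b) = Pr a j * ((a p + e) * (a b - e)).
  move=> j hj.
  have E1 := Pr_upd_gt a1 (a b - e) hj; rewrite -/a' in E1.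
  have E2 := Pr_upd_gt a (a p + e) (ltn_trans hpb hj); rewrite -/a1 in E2.
  have -> : Pr a' j * (a p * a b) = (Pr a' j * a1 b) * a p by rewrite a1b; ring.
  rewrite E1.
  have -> : Pr a1 j * (a b - e) * a p = (Pr a1 j * a p) * (a b - e) by ring.
  rewrite E2; ring.
have hTl : forall j, Tl a' j = Tl a j + (if (j <= p)%N then e else 0)
                               + (if (j <= b)%N then - e else 0).
  move=> j; rewrite /a' Tl_upd // a1b /a1 Tl_upd //; congr (_ + _ + _).
    by case: ifP => _ //; ring.
  by case: ifP => _ //; ring.
have fa' : feas a'.
  split.
  - move=> i hi; rewrite /a' /a1 /upd.
    case: (i.+1 =P b) => h1; case: (i.+1 =P p) => h2; case: (i =P b) => h3;
      case: (i =P p) => h4 /=; try (exfalso; slia).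
    + lra.
    + rewrite -h1; have := hm i hi; lra.
    + move: G1; rewrite -h2 /= => /(_ isT); lra.
    + rewrite h3; apply: G2; slia.
    + rewrite h4; have := hm p (_ : (p.+1 < n)%N); move=> /(_ ltac:(slia)); lra.
    + exact: hm.
  - rewrite /a' /a1 /upd; case: eqP => h1 //; case: eqP => h2 //; slia.
  - rewrite hTl hs /=; ring.
  - move=> j hj0 hj; case: (leqP j p) => h1.
      have := hc j hj0 hj; rewrite hPle // hTl h1 (leq_trans h1 (ltnW hpb)); lra.
    case: (leqP j b) => h2.
      have Hx : Pr a' j = Pr a j + e * (Pr a j / a p).
        apply: (mulIf (lt0r_neq0 hap)); rewrite hPmid //.
        field; exact: lt0r_neq0.
      rewrite Hx hTl (leqNgt j p) h1 h2 /=.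
      have := heh j hj; rewrite /h h1 h2 /=.
      have hq : 0 <= Pr a j / a p.
        apply: divr_ge0; last exact: ltW.
        by apply: Pr_ge0 => i hi; apply: ltW; apply: pos; slia.
      have hG := GG_gt0.
      rewrite ler_pdivlMr; last by lra.
      nra.
    rewrite hTl (leqNgt j p) h1 (leqNgt j b) h2 /= !addr0.
    have hpp : 0 < a p * a b by apply: mulr_gt0.
    have hP0 : 0 <= Pr a j by apply: Pr_ge0 => i hi; apply: ltW; apply: pos; slia.
    have hq : (a p + e) * (a b - e) <= a p * a b by nra.
    have : Pr a' j * (a p * a b) <= Pr a j * (a p * a b).
      by rewrite hPgt //; apply: ler_wpM2l.
    rewrite ler_pM2r // => H; apply: le_trans H _; exact: hc.
have := Hmin a' fa'.
have hPk0 : 0 < Pr a k by apply: Pr_gt0 => i hi; apply: pos; slia.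
have hpp : 0 < a p * a b by apply: mulr_gt0.
have hq : (a p + e) * (a b - e) < a p * a b by nra.
have : Pr a' k * (a p * a b) < Pr a k * (a p * a b).
  by rewrite hPgt // ltr_pM2l.
rewrite ltr_pM2r // => H1 H2.
by have := lt_le_trans H1 H2; rewrite ltxx.
Qed.


Lemma move_beta a k p r :
  feas a -> (forall c, feas c -> Pr a k <= Pr c k) ->
  (p < k)%N -> (k < r)%N -> (r < n)%N ->
  a p.+1 < a p -> a r < a r.-1 ->
  (forall j, (r < j)%N -> (j < n)%N -> Pr a j < GG * Tl a j) ->
  False.
Proof.
move=> fa Hmin hpk hkr hrn gp gr hsl.
have [hm hl hs hc] := fa.
have pos := feas_pos fa.
have mono := feas_mono fa.
have hpn : (p < n)%N by slia.
have hap := pos p hpn; have har := pos r hrn.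
set gap1 := a p - a p.+1.
set gap2 := a r.-1 - a r.
have g1p : 0 < gap1 by rewrite /gap1; lra.
have g2p : 0 < gap2 by rewrite /gap2; lra.
set h := fun j => if (r < j)%N then
                   (GG * Tl a j - Pr a j) / (Pr a j / a r + 1) else 1.
have hpos : forall j, (j < n)%N -> 0 < h j.
  move=> j hj; rewrite /h; case: ifP => // h1.
  apply: divr_gt0; first by have := hsl j h1 hj; lra.
  apply: ltr_wpDl => //.
  apply: divr_ge0; last exact: ltW.
  by apply: Pr_ge0 => i hi; apply: ltW; apply: pos; slia.
have hmin0 : 0 < Order.min gap1 gap2 by rewrite lt_min g1p g2p.
have [e [he0 hec heh]] := small hmin0 hpos.
move: hec; rewrite le_min => /andP[he1 he2].
set a1 := upd a p (a p - e).
set a' := upd a1 r (a r + e).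
have a1r : a1 r = a r by rewrite /a1 /upd; case: eqP => // ?; slia.
have hPle : forall j, (j <= p)%N -> Pr a' j = Pr a j.
  by move=> j hj; rewrite /a' Pr_upd_le; [rewrite /a1 Pr_upd_le | slia].
have hPmid : forall j, (p < j)%N -> (j <= r)%N -> Pr a' j * a p = Pr a j * (a p - e).
  by move=> j h1 h2; rewrite /a' Pr_upd_le // /a1 Pr_upd_gt.
have hPgt : forall j, (r < j)%N -> Pr a' j * (a p * a r) = Pr a j * ((a p - e) * (a r + e)).
  move=> j hj.
  have E1 := Pr_upd_gt a1 (a r + e) hj; rewrite -/a' in E1.
  have E2 := Pr_upd_gt a (a p - e) (ltn_trans (ltn_trans hpk hkr) hj); rewrite -/a1 in E2.
  have -> : Pr a' j * (a p * a r) = (Pr a' j * a1 r) * a p by rewrite a1r; ring.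
  rewrite E1.
  have -> : Pr a1 j * (a r + e) * a p = (Pr a1 j * a p) * (a r + e) by ring.
  rewrite E2; ring.
have hTl : forall j, Tl a' j = Tl a j + (if (j <= p)%N then - e else 0)
                               + (if (j <= r)%N then e else 0).
  move=> j; rewrite /a' Tl_upd // a1r /a1 Tl_upd //; congr (_ + _ + _).
    by case: ifP => _ //; ring.
  by case: ifP => _ //; ring.
have fa' : feas a'.
  split.
  - move=> i hi; rewrite /a' /a1 /upd.
    case: (i.+1 =P r) => h1; case: (i.+1 =P p) => h2; case: (i =P r) => h3;
      case: (i =P p) => h4 /=; try (exfalso; slia).
    + rewrite -h1; move: he2; rewrite /gap2 -h1 /=; lra.
    + rewrite -h2; have := hm i hi; lra.
    + rewrite h3; have := hm r (_ : (r.+1 < n)%N); move=> /(_ ltac:(slia)); lra.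
    + rewrite h4; move: he1; rewrite /gap1; lra.
    + exact: hm.
  - rewrite /a' /a1 /upd; case: eqP => h1; first lra.
    case: eqP => h2 //; slia.
  - rewrite hTl hs /=; ring.
  - move=> j hj0 hj; case: (leqP j p) => h1.
      have := hc j hj0 hj; rewrite hPle // hTl h1 (leq_trans h1 (ltnW (ltn_trans hpk hkr))); lra.
    have hP0 : 0 <= Pr a j by apply: Pr_ge0 => i hi; apply: ltW; apply: pos; slia.
    case: (leqP j r) => h2.
      have H : Pr a' j <= Pr a j.
        have : Pr a' j * a p <= Pr a j * a p.
          rewrite hPmid //; apply: ler_wpM2l => //; lra.
        by rewrite ler_pM2r.
      rewrite hTl (leqNgt j p) h1 h2 /=.
      apply: le_trans H _; apply: le_trans (hc j hj0 hj) _.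
      rewrite addr0 ler_pM2l; [lra | exact: GG_gt0].
    rewrite hTl (leqNgt j p) h1 (leqNgt j r) h2 /= !addr0.
    set Q := Pr a j / a r.
    have HQ : Q * a r = Pr a j by rewrite /Q mulfVK //; exact: lt0r_neq0.
    have hQ : 0 <= Q by rewrite /Q divr_ge0 // ltW.
    have H1 : Pr a' j * (a r * a p) <= (Pr a j + e * Q) * (a r * a p).
      have -> : Pr a' j * (a r * a p) = Pr a' j * (a p * a r) by ring.
      rewrite hPgt //.
      have -> : (Pr a j + e * Q) * (a r * a p) = (Pr a j * a r + e * (Q * a r)) * a p by ring.
      rewrite HQ -subr_ge0.
      have -> : (Pr a j * a r + e * Pr a j) * a p - Pr a j * ((a p - e) * (a r + e)) = Pr a j * e * (a r + e) by ring.
      by apply: mulr_ge0; [apply: mulr_ge0 | lra]; lra.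
    have hpr : 0 < a r * a p by apply: mulr_gt0.
    rewrite ler_pM2r // in H1.
    apply: le_trans H1 _.
    have := heh j hj; rewrite /h h2 -/Q.
    rewrite ler_pdivlMr; last by lra.
    move=> H; have : 0 <= e * Q by apply: mulr_ge0; lra.
    nra.
have := Hmin a' fa'.
have hPk0 : 0 < Pr a k by apply: Pr_gt0 => i hi; apply: pos; slia.
have : Pr a' k * a p < Pr a k * a p.
  rewrite hPmid; [|slia|slia]; rewrite ltr_pM2l //; lra.
rewrite ltr_pM2r // => H1 H2.
by have := lt_le_trans H1 H2; rewrite ltxx.
Qed.


Lemma move_gamma a k p :
  feas a -> (forall c, feas c -> Pr a k <= Pr c k) ->
  (p.+1 < k)%N -> (k < n)%N ->
  ((0 < p)%N -> a p < a p.-1) -> a p.+1 < a p ->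
  (forall i, (p < i)%N -> (i < n)%N -> a i = a p.+1) ->
  Pr a p.+1 < GG * Tl a p.+1 -> False.
Proof.
move=> fa Hmin hpk hkn gp gw hconst hsl.
have [hm hl hs hc] := fa.
have pos := feas_pos fa.
have hpn : (p.+1 < n)%N by slia.
have hap := pos p (ltnW hpn).
set w := a p.+1.
rewrite -/w in gw hconst.
have hw : 0 < w := pos p.+1 hpn.
set L : R := (n - p.+1)%:R.
have hL : 0 < L by rewrite /L ltr0n; slia.
set af := fun (e : R) (i : nat) =>
  if (i < p)%N then a i else if i == p then a p + L * e else w - e.
have TlA : Tl a p.+1 = L * w.
  rewrite /Tl (eq_big_nat _ _ (F2 := fun=> w)); last first.
    by move=> i hi; apply: hconst; slia.
  by rewrite sumr_const_nat mulr_natl.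
have TlF : forall e, Tl (af e) p.+1 = L * (w - e).
  move=> e; rewrite /Tl (eq_big_nat _ _ (F2 := fun=> w - e)); last first.
    move=> i hi; rewrite /af; have -> : (i < p)%N = false by slia.
    by case: eqP => // ?; slia.
  by rewrite sumr_const_nat mulr_natl.
have TlFle : forall e j, (j <= p)%N -> Tl (af e) j = Tl a j.
  move=> e j hj.
  rewrite (Tl_split (af e) hj (ltnW (ltnW hpn))) (Tl_split a hj (ltnW (ltnW hpn))).
  rewrite (TlS (af e) (ltnW hpn)) (TlS a (ltnW hpn)) TlF TlA.
  have -> : \sum_(j <= i < p) af e i = \sum_(j <= i < p) a i.
    by apply: eq_big_nat => i hi; rewrite /af; have -> : (i < p)%N by slia.
  rewrite /af ltnn eqxx; ring.
have PrFle : forall e j, (j <= p)%N -> Pr (af e) j = Pr a j.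
  by move=> e j hj; apply: eq_big_nat => i hi; rewrite /af; have -> : (i < p)%N by slia.
have PrF1 : forall e, Pr (af e) p.+1 = Pr a p * (a p + L * e).
  by move=> e; rewrite PrS PrFle // /af ltnn eqxx.
have PrFk : forall e, Pr (af e) k = Pr a p * (a p + L * e) * (w - e) ^+ (k - p.+1).
  move=> e; rewrite (Pr_split (af e) (ltnW hpk)) PrF1 -prodr_const_nat.
  congr (_ * _); apply: eq_big_nat => i hi; rewrite /af.
  have -> : (i < p)%N = false by slia.
  by case: eqP => // ?; slia.
have PrAk : Pr a k = Pr (af 0) k.
  apply: eq_big_nat => i hi; rewrite /af; case: ifP => // h1.
  case: eqP => [->|h2]; first by rewrite mulr0 addr0.
  rewrite subr0 /w; apply: hconst; slia.
set gap1 := if (0 < p)%N then a p.-1 - a p else 1.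
have g1p : 0 < gap1 by rewrite /gap1; case: ifP => h //; have := gp h; lra.
have hPp : 0 < Pr a p by apply: Pr_gt0 => i hi; apply: pos; slia.
have hG := GG_gt0.
set slack := GG * Tl a p.+1 - Pr a p.+1.
have hslp : 0 < slack by rewrite /slack; lra.
set c1 := gap1 / L.
set c2 := (a p - w) / (L + 1).
set c4 := slack / (L * (Pr a p + GG)).
have hc1 : 0 < c1 by rewrite /c1 divr_gt0.
have hc2 : 0 < c2 by rewrite /c2; apply: divr_gt0; lra.
have hc4 : 0 < c4 by rewrite /c4; apply: divr_gt0 => //; apply: mulr_gt0 => //; lra.
set d := Order.min c1 (Order.min c2 (Order.min w c4)).
have hd : 0 < d by rewrite /d !lt_min hc1 hc2 hw hc4.
have hd1 : d <= c1 by rewrite /d ge_min lexx.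
have hd2 : d <= c2 by rewrite /d !ge_min lexx /= orbT.
have hd3 : d <= w by rewrite /d !ge_min lexx /= !orbT.
have hd4 : d <= c4 by rewrite /d !ge_min lexx /= !orbT.
have D1 : L * d <= gap1 by move: hd1; rewrite /c1 ler_pdivlMr // mulrC.
have D2 : (L + 1) * d <= a p - w by move: hd2; rewrite /c2 ler_pdivlMr; [rewrite mulrC|lra].
have D4 : L * d * (Pr a p + GG) <= slack.
  move: hd4; rewrite /c4 ler_pdivlMr; last by apply: mulr_gt0 => //; lra.
  by rewrite mulrA [d * L]mulrC.
have FE : forall e, - d <= e -> e <= d -> feas (af e).
  move=> e he1 he2.
  have hLe : - (L * d) <= L * e /\ L * e <= L * d.
    by split; [rewrite -mulrN ler_pM2l | rewrite ler_pM2l].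
  case: hLe => hLe1 hLe2.
  have hsum : Tl (af e) 0 = 1 / GG by rewrite TlFle.
  have hnn : forall l, (l < n)%N -> 0 <= af e l.
    move=> l hl'; rewrite /af; case: ifP => h1; first by apply: ltW; apply: pos.
    case: eqP => h2; lra.
  split => //.
  - move=> i hi; rewrite /af.
    case: (ltnP i.+1 p) => h1.
      have -> : (i < p)%N by slia.
      exact: hm.
    case: (ltnP i p) => h2.
      have -> : i.+1 == p by apply/eqP; slia.
      move: D1; rewrite /gap1.
      have -> : (0 < p)%N by slia.
      have -> : p.-1 = i by slia.
      lra.
    have -> : (i.+1 == p) = false by apply/eqP; slia.
    case: eqP => h3; lra.
  - rewrite /af; have -> : (n.-1 < p)%N = false by slia.
    have -> : (n.-1 == p) = false by apply/eqP; slia.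
    lra.
  - move=> j hj0 hj; case: (ltngtP j p.+1) => h1.
    + rewrite PrFle; last by slia.
      rewrite TlFle; last by slia.
      exact: hc.
    + apply: AUTO => //.
      rewrite /af.
      have -> : (j.-1 < p)%N = false by slia.
      have -> : (j < p)%N = false by slia.
      have -> : (j.-1 == p) = false by apply/eqP; slia.
      have -> : (j == p) = false by apply/eqP; slia.
      exact: lexx.
    + rewrite h1 PrF1 TlF.
      have : L * e * (Pr a p + GG) <= L * d * (Pr a p + GG).
        by apply: ler_wpM2r; [lra | exact: hLe2].
      move=> H0; have H1 := le_trans H0 D4.
      move: H1; rewrite /slack TlA PrS => H1.
      have -> : GG * (L * (w - e)) = GG * (L * w) - L * e * GG by ring.
      have -> : Pr a p * (a p + L * e) = Pr a p * a p + L * e * Pr a p by ring.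
      lra.
have F1 := Hmin _ (FE d ltac:(lra) ltac:(lra)).
have F2 := Hmin _ (FE (- d) ltac:(lra) ltac:(lra)).
rewrite PrFk in F1; rewrite PrFk in F2; rewrite PrAk PrFk in F1 F2.
rewrite mulr0 addr0 subr0 in F1 F2.
set t := (k - p.+1)%N in F1 F2.
set A := Pr a p in F1 F2 hPp.
set X := a p in F1 F2 D2 hap.
have hwd : 0 <= w - d by lra.
have hf0 : 0 <= A * X * w ^+ t.
  by apply: mulr_ge0; [apply: mulr_ge0; apply: ltW | apply: exprn_ge0; apply: ltW].
have H : (A * X * w ^+ t) * (A * X * w ^+ t) <=
         (A * (X + L * d) * (w - d) ^+ t) * (A * (X + L * - d) * (w - - d) ^+ t).
  by apply: ler_pM.
have H2 : (w - d) ^+ t * (w - - d) ^+ t <= w ^+ t * w ^+ t.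
  rewrite -!exprMn; apply: lerXn2r.
  - by rewrite nnegrE; apply: mulr_ge0; lra.
  - by rewrite nnegrE; apply: mulr_ge0; lra.
  nra.
have H3 : (X + L * d) * (X + L * - d) < X * X.
  have : 0 < L * d by apply: mulr_gt0.
  nra.
have hwt : 0 < w ^+ t by apply: exprn_gt0.
have hdt : 0 <= (w - d) ^+ t * (w - - d) ^+ t.
  by apply: mulr_ge0; apply: exprn_ge0; lra.
have hXm : 0 <= (X + L * d) * (X + L * - d).
  apply: mulr_ge0; nra.
have : (A * (X + L * d) * (w - d) ^+ t) * (A * (X + L * - d) * (w - - d) ^+ t)
       < (A * X * w ^+ t) * (A * X * w ^+ t).
  have -> : (A * (X + L * d) * (w - d) ^+ t) * (A * (X + L * - d) * (w - - d) ^+ t)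
        = (A * A) * (((X + L * d) * (X + L * - d)) * ((w - d) ^+ t * (w - - d) ^+ t)) by ring.
  have -> : (A * X * w ^+ t) * (A * X * w ^+ t) = (A * A) * ((X * X) * (w ^+ t * w ^+ t)) by ring.
  rewrite ltr_pM2l; last by apply: mulr_gt0.
  apply: le_lt_trans (_ : _ <= ((X + L * d) * (X + L * - d)) * (w ^+ t * w ^+ t)) _.
    by apply: ler_wpM2l.
  by rewrite ltr_pM2r //; apply: mulr_gt0.
by rewrite ltNge H.
Qed.


Lemma Pr_pref a p : (forall l, (l < p)%N -> a l = su l) -> Pr a p = GG / vv p.
Proof.
by move=> h; rewrite -Pr_su; apply: eq_big_nat => i hi; apply: h; slia.
Qed.

Lemma Tl_pref a p : feas a -> (p <= n)%N -> (forall l, (l < p)%N -> a l = su l) ->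
  Tl a p = 1 / vv p.
Proof.
move=> fa hp h; have [_ _ hs _] := fa.
have := hs; rewrite (Tl_split a (leq0n p) hp).
have -> : \sum_(0 <= i < p) a i = \sum_(0 <= i < p) su i.
  by apply: eq_big_nat => i hi; apply: h; slia.
rewrite sum_su; lra.
Qed.

Lemma tail_const a k p :
  feas a -> (forall c, feas c -> Pr a k <= Pr c k) ->
  (p < k)%N -> (k <= n)%N ->
  (forall l, (l < p)%N -> a l = su l) ->
  ((0 < p)%N -> Pr a p = GG * Tl a p) ->
  ((p.+1 < n)%N -> Pr a p.+1 < GG * Tl a p.+1) ->
  forall l, (p <= l)%N -> (l < n)%N -> a l = a p.
Proof.
move=> fa Hmin hpk hkn pref tight slack.
have [hm hl hs hc] := fa.
have pos := feas_pos fa.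
have mono := feas_mono fa.
have hpn : (p < n)%N by slia.
have gp : (0 < p)%N -> a p < a p.-1.
  move=> h0; rewrite lt_def; apply/andP; split; last first.
    by apply: mono; slia.
  apply/eqP => heq.
  have := SA (j := p) fa h0 hpn heq; rewrite tight //; by rewrite ltxx.
suff last_eq : a n.-1 = a p.
  move=> l h1 h2; apply/le_anti; rewrite mono //=.
  by rewrite -last_eq; apply: mono; slia.
case: (eqVneq (a n.-1) (a p)) => // hne.
exfalso.
have hlt : a n.-1 < a p by rewrite lt_neqAle hne /=; apply: mono; slia.
have hpn1 : (p.+1 < n)%N.
  case: (ltnP p.+1 n) => // h0; have ep : n.-1 = p by slia.
  by move: hne; rewrite ep eqxx.
have sl := slack hpn1.
case: (eqVneq (a k.-1) (a p)) => hk.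
- (* case A : global comparison with yf p *)
  have hconst : forall i, (p <= i)%N -> (i < k)%N -> a i = a p.
    move=> i h1 h2; apply/le_anti; rewrite mono //=; last by slia.
    by rewrite -{1}hk; apply: mono; slia.
  have PrA : Pr a k = GG / vv p * a p ^+ (k - p).
    rewrite (Pr_split a (ltnW hpk)) Pr_pref // -prodr_const_nat; congr (_ * _).
    by apply: eq_big_nat => i hi; apply: hconst; slia.
  have TlA : Tl a p = 1 / vv p by apply: Tl_pref => //; exact: ltnW.
  have hcc : cc p < a p.
    have E : Tl a p < (n - p)%:R * a p.
      rewrite (Tl_split a (_ : (p <= n.-1)%N) (_ : (n.-1 <= n)%N)); [|slia|slia].
      rewrite (TlS a (_ : (n.-1 < n)%N)); last by slia.
      have -> : n.-1.+1 = n by slia.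
      rewrite Tl_n addr0.
      have H1 : \sum_(p <= i < n.-1) a i <= \sum_(p <= i < n.-1) a p.
        rewrite big_nat_cond [X in _ <= X]big_nat_cond; apply: ler_sum => i /andP[/andP[h1 h2] _].
        by apply: mono; slia.
      rewrite sumr_const_nat in H1.
      have -> : (n - p)%:R = (n.-1 - p)%:R + 1 :> R.
        by rewrite natr1; congr (_%:R); slia.
      rewrite mulrDl mul1r -mulr_natl in H1 *.
      lra.
    have := cc_le hpn; rewrite -TlA => E2.
    have hnp : 0 < (n - p)%:R :> R by rewrite ltr0n; slia.
    by rewrite -(ltr_pM2r hnp) E2 mulrC.
  have hy := Hmin _ (yf_feas hpn).
  rewrite Pr_yf_ge in hy; last by slia.
  rewrite PrA in hy.
  have hc0 := cc_gt0 hpn.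
  have : cc p ^+ (k - p) < a p ^+ (k - p).
    rewrite ltrXn2r //; [apply/eqP; slia | exact: ltW].
  have hgv : 0 < GG / vv p by apply: divr_gt0; [exact: GG_gt0 | exact: vv_gt0].
  rewrite -(ltr_pM2l hgv) => H.
  by have := lt_le_trans H hy; rewrite ltxx.
-
  have hk1 : a k.-1 < a p by rewrite lt_neqAle hk /=; apply: mono; slia.
  have hpk1 : (p < k.-1)%N.
    case: (ltngtP p k.-1) => // h0; first by slia.
    by move: hk1; rewrite -h0 ltxx.
  have exb : exists i, (p < i)%N && ((i == n.-1) || (a i.+1 < a i)).
    by exists n.-1; rewrite eqxx orTb andbT; slia.
  case: (ex_minnP exb) => b /andP[hpb hbq] hbmin.
  have hbn : (b <= n.-1)%N by apply: hbmin; rewrite eqxx orTb andbT; slia.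
  have flat : forall i, (p < i)%N -> (i < b)%N -> a i.+1 = a i.
    move=> i h1 h2; apply/le_anti; rewrite hm /=; last by slia.
    rewrite leNgt; apply/negP => h3.
    have := hbmin i; rewrite h1 h3 orbT /= => /(_ isT); slia.
  have flat2 : forall i, (p < i)%N -> (i <= b)%N -> a i = a p.+1.
    elim=> [//|i IH] h1 h2.
    case: (ltngtP p i) => h3; last by rewrite h3.
      rewrite (flat i h3); last by slia.
      by apply: IH => //; slia.
    slia.
  case: (ltnP b k) => hbk.
  + apply: (move_alpha fa Hmin hpb hbk hkn gp).
      move=> h0; move: hbq; have -> : (b == n.-1) = false by apply/eqP; slia.
      by [].
    move=> j h1 h2; case: (ltngtP j p.+1) => h3; first by slia.
      apply: (SA fa); [slia | slia |].
      have e1 : j.-1.+1 = j by slia.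
      by have := flat j.-1 ltac:(slia) ltac:(slia); rewrite e1 => ->.
    by rewrite h3; apply: sl.
  + case: (ltnP b n.-1) => hbn1.
    * have hbd : a b.+1 < a b.
        by move: hbq; have -> : (b == n.-1) = false by apply/eqP; slia.
      have exd : exists i, (i.+1 < n)%N && (a i.+1 < a i).
        by exists b; rewrite hbd andbT; slia.
      have ubd : forall i, (i.+1 < n)%N && (a i.+1 < a i) -> (i <= n)%N.
        by move=> i /andP[h1 _]; slia.
      case: (ex_maxnP exd ubd) => d /andP[hdn hdd] hdmax.
      have hbd' : (b <= d)%N by apply: hdmax; rewrite hbd andbT; slia.
      apply: (move_beta (r := d.+1) fa Hmin hpk); [slia | slia | | by [] |].
        by rewrite -(flat2 k.-1); [exact: hk1|slia|slia].
      move=> j h1 h2; apply: (SA fa); [slia | slia |].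
      apply/le_anti; rewrite (mono j.-1 j) ?andbT; [|slia|slia].
      rewrite leNgt; apply/negP => h3.
      have := hdmax j.-1; have -> : j.-1.+1 = j by slia.
      rewrite h3 andbT => /(_ ltac:(slia)); slia.
    * have ebn : b = n.-1 by slia.
      apply: (move_gamma fa Hmin (_ : (p.+1 < k)%N) (_ : (k < n)%N) gp); [slia|slia| | |exact: sl].
        by rewrite -(flat2 k.-1); [exact: hk1|slia|slia].
      by move=> i h1 h2; apply: flat2; slia.
Qed.


Lemma core a k : feas a -> (forall c, feas c -> Pr a k <= Pr c k) ->
  (0 < k)%N -> (k <= n)%N ->
  exists p, (p < k)%N /\ forall l, (l < n)%N -> a l = yf p l.
Proof.
move=> fa Hmin hk0 hkn.
have [hm hl hs hc] := fa.
have exq : exists p, (p == n.-1) || (Pr a p.+1 < GG * Tl a p.+1).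
  by exists n.-1; rewrite eqxx.
case: (ex_minnP exq) => p hq hpmin.
have hpn1 : (p <= n.-1)%N by apply: hpmin; rewrite eqxx.
have hpn : (p < n)%N by slia.
have tight : forall j, (0 < j)%N -> (j <= p)%N -> Pr a j = GG * Tl a j.
  move=> j hj0 hjp; have hc' := hc j hj0 (_ : (j < n)%N); move: hc' => /(_ ltac:(slia)) hc'.
  apply/eqP; rewrite eq_le hc' /= leNgt; apply/negP => hlt.
  have := hpmin j.-1; have -> : j.-1.+1 = j by slia.
  rewrite hlt orbT => /(_ isT); slia.
have pref := prefix fa hpn tight.
have TlA : Tl a p = 1 / vv p by apply: Tl_pref => //; exact: ltnW.
case: (ltnP p k) => hpk.
- have sl : (p.+1 < n)%N -> Pr a p.+1 < GG * Tl a p.+1.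
    move=> h0; move: hq; have -> : (p == n.-1) = false by apply/eqP; slia.
    by [].
  have tc := tail_const fa Hmin hpk hkn pref (fun h => tight p h (leqnn p)) sl.
  exists p; split => // l hl0; rewrite /yf; case: ifP => h; first by apply: pref.
  rewrite tc; [|slia|slia].
  have E : Tl a p = a p * (n - p)%:R.
    rewrite /Tl (eq_big_nat _ _ (F2 := fun=> a p)); last by move=> i hi; apply: tc; slia.
    by rewrite sumr_const_nat mulr_natr.
  have hnp : (n - p)%:R != 0 :> R by rewrite pnatr_eq0; slia.
  apply: (mulIf hnp); rewrite -E TlA cc_le //.
- exfalso.
  set q := k.-1.
  have ekq : k = q.+1 by rewrite /q; slia.
  have hqn : (q < n)%N by slia.
  have PrA : Pr a k = GG / vv k by apply: Pr_pref => l hl1; apply: pref; slia.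
  have hy := Hmin _ (yf_feas hqn).
  rewrite Pr_yf_ge in hy; last by slia.
  rewrite (_ : (k - q = 1)%N) in hy; last by slia.
  rewrite expr1 PrA ekq vvS in hy.
  set N : R := (n - q)%:R.
  have hv := vv_gt0 q; have hu := uu_gt0 q; have hG := GG_gt0.
  have hN : 0 < N by rewrite /N ltr0n; slia.
  have key : uu q < N * vv q.
    rewrite uv; case: (posnP q) => hq0.
      have : (3%:R : R) <= N by rewrite /N ler_nat; slia.
      have := vv_ge1 q; nra.
    have : (2%:R : R) <= N by rewrite /N ler_nat; slia.
    have := vv_ge2 hq0; nra.
  have E1 : GG / vv q * cc q = GG * (vv q * (N * vv q))^-1.
    rewrite /cc -/N; field.
    by rewrite (lt0r_neq0 hv) (lt0r_neq0 hN).
  have E2 : GG / (uu q * vv q) = GG * (uu q * vv q)^-1 by [].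
  move: hy; rewrite E1 ler_pM2l // lef_pV2 ?posrE; last first.
  - by apply: mulr_gt0 => //; apply: mulr_gt0.
  - by apply: mulr_gt0.
  rewrite [uu q * _]mulrC ler_pM2l // => H.
  by have := lt_le_trans key H; rewrite ltxx.
Qed.


Definition rowf (x : 'rV[R]_n) : nat -> R :=
  fun i => odflt 0 (omap (fun j : 'I_n => x 0 j) (insub i)).

Lemma rowfE x (j : 'I_n) : rowf x j = x 0 j.
Proof. by rewrite /rowf valK. Qed.

Lemma rowfE' x l (hl : (l < n)%N) : rowf x l = x 0 (Ordinal hl).
Proof. by rewrite -rowfE. Qed.

Lemma Pr_ord (F : nat -> R) j : (j <= n)%N -> Pr F j = \prod_(i < n | (i < j)%N) F i.
Proof.
by move=> h; rewrite /Pr (big_nat_widen _ _ _ predT _ h) big_mkord.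
Qed.

Lemma Tl_ord (F : nat -> R) j : Tl F j = \sum_(i < n | (j <= i)%N) F i.
Proof. by rewrite /Tl big_geq_mkord. Qed.

Lemma fk_Pr x k : (k <= n)%N -> fk k x = Pr (rowf x) k.
Proof.
by move=> h; rewrite Pr_ord // /fk; apply: eq_bigr => i _; rewrite rowfE.
Qed.

Lemma sum_rowf x j : Tl (rowf x) j = \sum_(i < n | (j <= i)%N) x 0 i.
Proof. by rewrite Tl_ord; apply: eq_bigr => i _; rewrite rowfE. Qed.

Lemma inA_feas x : inA g n x -> feas (rowf x).
Proof.
case=> hm [hl [hs hc]]; split.
- move=> i hi; rewrite (rowfE' x hi) (rowfE' x (ltnW hi)); exact: hm.
- have h : (n.-1 < n)%N by slia.
  rewrite (rowfE' x h); apply: hl => /=; slia.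
- rewrite sum_rowf -hs.
  by rewrite (eq_bigr (fun i => x 0 i)) //; apply: eq_bigl => i.
- move=> j hj0 hj; rewrite sum_rowf -fk_Pr; last by slia.
  apply: hc; apply/andP; split; slia.
Qed.

Lemma feas_inA x : feas (rowf x) -> inA g n x.
Proof.
move=> fa; have [hm hl hs hc] := fa; have mono := feas_mono fa.
split; [|split; [|split]].
- move=> i j hij; rewrite -!rowfE; apply: mono => //.
- move=> i hi; rewrite -rowfE; have -> : nat_of_ord i = n.-1 by slia.
  exact: hl.
- have := hs; rewrite sum_rowf => <-.
  by apply: eq_bigl => i.
- move=> k /andP[h1 h2]; have := hc k ltac:(slia) ltac:(slia).
  rewrite sum_rowf -fk_Pr; last by slia.
  by [].
Qed.

Lemma feas_ext a b : (forall l, (l < n)%N -> a l = b l) -> feas a -> feas b.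
Proof.
move=> E [hm hl hs hc].
have hPr : forall j, (j <= n)%N -> Pr a j = Pr b j.
  by move=> j hj; apply: eq_big_nat => i hi; apply: E; slia.
have hTl : forall j, Tl a j = Tl b j.
  by move=> j; apply: eq_big_nat => i hi; apply: E; slia.
split.
- by move=> i hi; rewrite -!E //; [exact: hm | slia].
- by rewrite -E; [exact: hl | slia].
- by rewrite -hTl.
- by move=> j h1 h2; rewrite -hPr -?hTl; [exact: hc | slia].
Qed.

Lemma main_sec k (y : 'rV[R]_n) :
  (1 <= k <= n)%N ->
  inA g n y ->
  (forall x : 'rV[R]_n, inA g n x -> fk k y <= fk k x) ->
  exists i0 : nat, (1 <= i0 <= k)%N /\ y = yv g n i0.
Proof.
move=> /andP[hk0 hkn] hy Hmin.
have fa := inA_feas hy.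
have Hmin' : forall c, feas c -> Pr (rowf y) k <= Pr c k.
  move=> c fc.
  set x := \row_(i < n) c i.
  have E : forall l, (l < n)%N -> c l = rowf x l.
    by move=> l hl; rewrite (rowfE' x hl) /x mxE.
  have fx : feas (rowf x) by apply: feas_ext fc.
  have := Hmin x (feas_inA fx).
  rewrite !fk_Pr // => H; apply: le_trans H _.
  by rewrite le_eqVlt; apply/orP; left; apply/eqP; apply: eq_big_nat => i hi; rewrite E //; slia.
have [p [hpk hp]] := core fa Hmin' hk0 hkn.
exists p.+1; split; first by apply/andP; split; slia.
apply/rowP => i; rewrite /yv mxE -rowfE hp //.
rewrite /yf subn1 /=.
case: ifP => // _.
rewrite /cc /vv /tsylv /sylv /=.
have -> : (n - p.+1 + 1)%N = (n - p)%N by slia.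
have h1 : (1 <= sylv0 g p)%N by have := sylv0_ge2 p; slia.
by rewrite (natrB _ h1).
Qed.

End Main.

Theorem proposition3p8 (R : realType) (g n k : nat) (y : 'rV[R]_n) :
  (1 <= g)%N -> (3 <= n)%N -> (1 <= k <= n)%N ->
  inA g n y ->
  (forall x : 'rV[R]_n, inA g n x -> fk k y <= fk k x) ->
  exists i0 : nat, (1 <= i0 <= k)%N /\ y = yv g n i0.
Proof.
move=> g1 n3 hk hy Hmin.
exact: (main_sec g1 n3 hk hy Hmin).
Qed.
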